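(* Consider a substrate edge $(u,v)\in E_S$. Let $0<\varepsilon\le1$ be such that $d_{\max}(r,u,v)/d_S(u,v)\le\varepsilon$ for all $r\in\mathcal R$. Let $\Delta=\sum_{r\in\mathcal R}\big(A_{\max}(r,u,v)/d_{\max}(r,u,v)\big)^2$ and $\gamma=1+\varepsilon\sqrt{2\Delta\log|V_S|}$. Then $\mathbb P\big(A_{u,v}\ge\gamma\cdot d_S(u,v)\big)\le|V_S|^{-4}$.
   Context: Substrate: directed graph $G_S=(V_S,E_S)$, node types $\mathcal T$, $V_S^\tau\subseteq V_S$, resources $R_S=\{(\tau,u):u\in V_S^\tau\}\cup E_S$, capacities $d_S(x,y)>0$. Requests $r\in\mathcal R$: directed graph $G_r=(V_r,E_r)$, types $\tau_r$, demands $d_r(i),d_r(i,j)\ge0$, allowed node sets $V_S^{r,i}\subseteq V_S^{\tau_r(i)}$, allowed edge sets $E_S^{r,i,j}\subseteq E_S$. Valid mappings $m_r$ (nodes to allowed nodes, each edge $(i,j)$ to a directed path between the images within $E_S^{r,i,j}$), set $\mathcal M_r$; allocation $A(m_r,u,v)=\sum_{(i,j):(u,v)\in m^E_r(i,j)}d_r(i,j)$ for edges and $A(m_r,\tau,u)=\sum_{i:\tau_r(i)=\tau,m_r^V(i)=u}d_r(i)$ for node resources; $d_{\max}(r,u,v)=\max_{(i,j)\in E_r:(u,v)\in E_S^{r,i,j}}d_r(i,j)$; $A_{\max}(r,u,v)=\max_{m\in\mathcal M_r}A(m,u,v)$. Rounding setting (profit variant): for each request $r$ a finite family $\mathcal D_r=\{(f^k_r,m^k_r)\}_k$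 with $f^k_r>0$, $m^k_r\in\mathcal M_r$, $\sum_kf^k_r\le1$, obtained by decomposing a feasible solution of the paper's decomposable LP relaxation of the VNEP, so that in particular $\sum_r\sum_kf^k_rA(m^k_r,x,y)\le d_S(x,y)$ for all resources $(x,y)$. Independently for each $r$, $m^k_r$ is selected with probability $f^k_r$ and nothing with probability $1-\sum_kf^k_r$; $A_{u,v}$ is the total allocation of the selected mappings on $(u,v)$. *)

(* Defs.v *)
From HB Require Import structures.
From mathcomp Require Import all_boot all_order all_algebra.
From mathcomp Require Import boolp reals exp.
Set Implicit Arguments. Unset Strict Implicit. Unset Printing Implicit Defensive.
Import Order.TTheory GRing.Theory Num.Theory.
Local Open Scope ring_scope.

Record request (VS Ty : finType) (R : realType) := Request {
  vnode : finType;
  vedge : rel vnode;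
  vtype : vnode -> Ty;
  dnode : vnode -> R;
  dedge : vnode -> vnode -> R;
  allowedV : vnode -> {set VS};
  allowedE : vnode -> vnode -> {set VS * VS}
}.

Arguments vnode {VS Ty R} r.
Arguments vedge {VS Ty R} r.
Arguments vtype {VS Ty R} r.
Arguments dnode {VS Ty R} r.
Arguments dedge {VS Ty R} r.
Arguments allowedV {VS Ty R} r.
Arguments allowedE {VS Ty R} r.

Section Defs.
Variables (VS Ty : finType) (R : realType).

Definition wf_request (VT : Ty -> {set VS}) (ES : rel VS) (rq : request VS Ty R) : Prop :=
  [/\ forall i, 0 <= dnode rq i,
      forall i j, 0 <= dedge rq i j,
      forall i, allowedV rq i \subset VT (vtype rq i) &
      forall i j a b, (a, b) \in allowedE rq i j -> ES a b].

Definition mapping (rq : request VS Ty R) : finType :=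
  ({ffun vnode rq -> VS} * {ffun (vnode rq * vnode rq) -> {set VS * VS}})%type.

Definition is_path_in (F : {set VS * VS}) (s t : VS) (P : {set VS * VS}) : Prop :=
  exists p : seq VS,
    [/\ path (fun a b => (a, b) \in F) s p, last s p = t, uniq (s :: p)
      & P = [set e in zip (s :: p) p]].

Definition valid_mapping (rq : request VS Ty R) (m : mapping rq) : Prop :=
  (forall i, m.1 i \in allowedV rq i) /\
  (forall i j, vedge rq i j -> is_path_in (allowedE rq i j) (m.1 i) (m.1 j) (m.2 (i, j))).

Definition alloc_edge (rq : request VS Ty R) (m : mapping rq) (u v : VS) : R :=
  \sum_(p : vnode rq * vnode rq | vedge rq p.1 p.2 && ((u, v) \in m.2 p)) dedge rq p.1 p.2.

Definition alloc_node (rq : request VS Ty R) (m : mapping rq) (tau : Ty) (u : VS) : R :=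
  \sum_(i : vnode rq | (vtype rq i == tau) && (m.1 i == u)) dnode rq i.

(* d_max(r, u, v); the maximum over an empty index set is 0. *)
Definition dmax (rq : request VS Ty R) (u v : VS) : R :=
  \big[Num.max/0]_(p : vnode rq * vnode rq |
      vedge rq p.1 p.2 && ((u, v) \in allowedE rq p.1 p.2)) dedge rq p.1 p.2.

(* A_max(r, u, v) = max over valid mappings (0 if there is none). *)
Definition Amax (rq : request VS Ty R) (u v : VS) : R :=
  \big[Num.max/0]_(m : mapping rq | `[< valid_mapping m >]) alloc_edge m u v.

(* Probability of the outcome w of the independent randomized rounding:
   w r = Some k : mapping m r k selected (k in the family index set Kr r);
   w r = None : nothing selected for r. *)
Definition outcome_weight (Req K : finType) (Kr : Req -> {set K}) (f : Req -> K -> R)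
    (w : {ffun Req -> option K}) : R :=
  \prod_(r : Req) match w r with
                  | Some k => if k \in Kr r then f r k else 0
                  | None => 1 - \sum_(k in Kr r) f r k
                  end.

Definition rounded_alloc (Req K : finType) (req : Req -> request VS Ty R)
    (m : forall r, K -> mapping (req r)) (w : {ffun Req -> option K}) (u v : VS) : R :=
  \sum_(r : Req) match w r with
                 | Some k => alloc_edge (m r k) u v
                 | None => 0
                 end.

End Defs.

(* Main.v *)
Require Import Defs.
From HB Require Import structures.
From mathcomp Require Import all_boot all_order all_algebra.
From mathcomp Require Import boolp reals exp.
From mathcomp Require Import classical_sets topology normedtype sequences derive realfun convex interval_inference.
From mathcomp Require Import ring lra.
Import Order.TTheory GRing.Theory Num.Theory numFieldNormedType.Exports.
Local Open Scope ring_scope.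

Section Calc.
Variable R : realType.

Lemma dT (x : R) : is_derive x 1 (fun s : R => s * (expR s + 1) - 2 * (expR s - 1))
   (x * expR x + (expR x + 1) - 2 * expR x).
Proof.
apply: is_derive_eq.
by rewrite addr0 subr0 [_%:A]mulr1.
Qed.

Lemma tanh_le (s : R) : 0 <= s -> 2 * (expR s - 1) <= s * (expR s + 1).
Proof.
move=> s0.
set T := fun s : R => s * (expR s + 1) - 2 * (expR s - 1).
suff : T 0 <= T s by rewrite /T expR0 mul0r subrr mulr0 subrr subr_ge0.
apply: (@ger0_derive1_ndecry R T 0) => //.
- move=> x _; rewrite derive1E; have [_ ->] := dT x.
  have h1 := expR_ge1Dx (- x); rewrite expRN in h1.
  have ex := expR_gt0 x.
  have : expR x * (1 - x) <= 1.
    by have := ler_wpM2l (ltW ex) h1; rewrite mulfV ?gt_eqF.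
  lra.
- apply: derivable_within_continuous => x _; by case: (dT x).
Qed.


Lemma dH (q x : R) : is_derive x 1
  (fun h : R => (1 - q + q * expR h) * expR (- (q * h + h ^+ 2 / 8)))
  (expR (- (q * x + x ^+ 2 / 8)) * (q * expR x - (q + x / 4) * (1 - q + q * expR x))).
Proof.
apply: is_derive_eq.
rewrite ![_%:A]mulr1 !scaler0 !add0r mul1r.
rewrite -![_ *: _]/(_ * _).

field.
all: by rewrite ?pnatr_eq0.
Qed.


Lemma Kneg (q x : R) : 0 <= q <= 1 -> 0 <= x ->
  q * expR x - (q + x / 4) * (1 - q + q * expR x) <= 0.
Proof.
move=> /andP[q0 q1] x0.
set s := x / 2.
have xs : x = s + s by rewrite /s; field.
have ey : expR x = expR s * expR s by rewrite xs expRD.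
set y := expR s in ey.
have s0 : 0 <= s by rewrite /s; lra.
have y1 : 1 <= y by rewrite /y -expR0 ler_expR.
have T := @tanh_le s s0; rewrite -/y in T.
rewrite ey.
set S := 1 - q + q * (y * y).
have S0 : 0 <= S by rewrite /S; nra.
have A : 2 * (y - 1) * S <= s * (y + 1) * S by apply: ler_wpM2r.
have B : 2 * q * (1 - q) * (y - 1) * (y + 1) ^+ 2 <= 2 * (y - 1) * S.
  rewrite -subr_ge0.
  have -> : 2 * (y - 1) * S - 2 * q * (1 - q) * (y - 1) * (y + 1) ^+ 2
      = 2 * (y - 1) * (1 - q * (y + 1)) ^+ 2 by rewrite /S; ring.
  by rewrite mulr_ge0 ?sqr_ge0 // mulr_ge0 //; lra.
have C : (y + 1) * (2 * q * (1 - q) * (y * y - 1)) <= (y + 1) * (s * S).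
  have -> : (y + 1) * (2 * q * (1 - q) * (y * y - 1)) = 2 * q * (1 - q) * (y - 1) * (y + 1) ^+ 2 by ring.
  have -> : (y + 1) * (s * S) = s * (y + 1) * S by ring.
  lra.
rewrite ler_pM2l in C; last lra.
have -> : q * (y * y) - (q + x / 4) * S = (2 * q * (1 - q) * (y * y - 1) - s * S) / 2 by rewrite /S /s; field.
rewrite pmulr_lle0 ?invr_gt0 //; lra.
Qed.

Lemma key (q h : R) : 0 <= q <= 1 -> 0 <= h ->
  1 - q + q * expR h <= expR (q * h + h ^+ 2 / 8).
Proof.
move=> qb h0.
set H := fun h : R => (1 - q + q * expR h) * expR (- (q * h + h ^+ 2 / 8)).
suff : H h <= H 0.
  rewrite /H expR0 mulr1 mulr0 expr0n /= mul0r addr0 oppr0 expR0 mulr1 subrK.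
  rewrite expRN -(ler_pM2r (expR_gt0 (q * h + h ^+ 2 / 8))) mulfVK ?gt_eqF ?expR_gt0 //.
  by rewrite mul1r.
apply: (@ler0_derive1_nincry R H 0) => //.
- move=> x; rewrite in_itv /= andbT => /ltW x0.
  rewrite derive1E; have [_ ->] := dH q x.
  by rewrite pmulr_rle0 ?expR_gt0 // Kneg.
- apply: derivable_within_continuous => x _; by case: (dH q x).
Qed.

Lemma chord (l c x : R) : 0 < c -> 0 <= x <= c ->
  expR (l * x) <= 1 - x / c + x / c * expR (l * c).
Proof.
move=> c0 /andP[x0 xc].
have t0 : 0 <= x / c by rewrite divr_ge0 // ltW.
have t1 : x / c <= 1 by rewrite ler_pdivrMr // mul1r.
have := @convex_expR R (Itv01 t0 t1) (l * c) 0.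
rewrite !convRE /= expR0 mulr0 addr0 mulr1.
have -> : x / c * (l * c) = l * x by field; rewrite gt_eqF.
by rewrite /unstable.onem addrC.
Qed.

Lemma hoeff (I : finType) (p x : I -> R) (c l : R) :
  (forall i, 0 <= p i) -> \sum_i p i = 1 ->
  (forall i, 0 < p i -> 0 <= x i <= c) -> 0 <= l ->
  \sum_i p i * expR (l * x i) <= expR (l * (\sum_i p i * x i) + l ^+ 2 * c ^+ 2 / 8).
Proof.
move=> p0 p1 px l0.
have supp i : p i = 0 \/ (0 < p i /\ 0 <= x i <= c).
  have := p0 i; rewrite le_eqVlt => /orP[/eqP <-|pi]; [by left|by right; split => //; apply: px].
have mu0 : 0 <= \sum_i p i * x i.
  apply: sumr_ge0 => i _; case: (supp i) => [->|[pi /andP[xi _]]]; first by rewrite mul0r.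
  by rewrite mulr_ge0 // ltW.
have muc : \sum_i p i * x i <= c.
  rewrite -[c]mul1r -p1 mulr_suml; apply: ler_sum => i _.
  case: (supp i) => [->|[pi /andP[_ xi]]]; first by rewrite !mul0r.
  by rewrite ler_wpM2l // ltW.
have [cle0|c0] := leP c 0.
  have E1 : \sum_i p i * expR (l * x i) = 1.
    rewrite -p1; apply: eq_bigr => i _.
    case: (supp i) => [->|[pi xi]]; first by rewrite !mul0r.
    have -> : x i = 0 by apply/eqP; rewrite eq_le; apply/andP; split; lra.
    by rewrite mulr0 expR0 mulr1.
  have M0 : \sum_i p i * x i = 0 by apply/eqP; rewrite eq_le mu0 andbT; lra.
  rewrite E1 M0 mulr0 add0r.
  apply: le_trans (expR_ge1Dx _); rewrite lerDl.
  by rewrite divr_ge0 // mulr_ge0 // sqr_ge0.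
set mu := \sum_i p i * x i.
set E := expR (l * c).
have step : \sum_i p i * expR (l * x i) <= \sum_i (p i + p i * x i * ((E - 1) / c)).
  apply: ler_sum => i _.
  case: (supp i) => [->|[pi xi]]; first by rewrite !mul0r add0r.
  have -> : p i + p i * x i * ((E - 1) / c) = p i * (1 - x i / c + x i / c * E) by field; rewrite gt_eqF.
  by apply: ler_wpM2l; [exact: ltW | exact: chord].
apply: (le_trans step).
rewrite big_split /= -mulr_suml p1.
have -> : 1 + mu * ((E - 1) / c) = 1 - mu / c + mu / c * E by field; rewrite gt_eqF.
have -> : l * mu + l ^+ 2 * c ^+ 2 / 8 = mu / c * (l * c) + (l * c) ^+ 2 / 8 by field; rewrite gt_eqF.
apply: key; last by rewrite mulr_ge0 // ltW.
apply/andP; split; [exact: divr_ge0 mu0 (ltW c0) | by rewrite ler_pdivrMr // mul1r].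
Qed.

Lemma sum_option (K : finType) (F : option K -> R) :
  \sum_(o : option K) F o = F None + \sum_(k : K) F (Some k).
Proof.
have E : perm_eq (index_enum (option K)) (None :: map Some (index_enum K)).
  apply: uniq_perm; first exact: index_enum_uniq.
    rewrite /= map_inj_uniq ?index_enum_uniq //; last by move=> a b [].
    by rewrite andbT; apply/mapP => -[].
  by case=> [k|]; rewrite !mem_index_enum ?in_cons ?mem_map ?mem_index_enum //; move=> a b [].
by rewrite (perm_big _ E) big_cons big_map.
Qed.

Lemma bigmax_ge0 (I : finType) (P : pred I) (F : I -> R) :
  0 <= \big[Num.max/0]_(i | P i) F i.
Proof. by elim/big_rec: _ => // i x _ hx; rewrite le_max hx orbT. Qed.

Lemma bigmax_le (I : finType) (P : pred I) (F : I -> R) b :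
  0 <= b -> (forall i, P i -> F i <= b) -> \big[Num.max/0]_(i | P i) F i <= b.
Proof. by move=> b0 h; elim/big_rec: _ => // i x Pi hx; rewrite ge_max hx h. Qed.

Lemma le_bigmax_seq (I : eqType) (s : seq I) (P : pred I) (F : I -> R) i :
  i \in s -> P i -> F i <= \big[Num.max/0]_(j <- s | P j) F j.
Proof.
elim: s => // a s IH; rewrite in_cons big_cons => /orP[/eqP ->|iS] Pi.
  by rewrite Pi le_max lexx.
have := IH iS Pi; case: ifP => _ h //; by rewrite le_max h orbT.
Qed.

Lemma le_bigmax (I : finType) (P : pred I) (F : I -> R) i :
  P i -> F i <= \big[Num.max/0]_(j | P j) F j.
Proof. by move=> Pi; apply: le_bigmax_seq; rewrite ?mem_index_enum. Qed.

Lemma chernoff_fin (Req J : finType) (g X : Req -> J -> R) (a l : R) :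
  (forall r j, 0 <= g r j) -> 0 <= l ->
  \sum_(w : {ffun Req -> J} | a <= \sum_r X r (w r)) \prod_r g r (w r)
   <= expR (- (l * a)) * \prod_r \sum_j g r j * expR (l * X r j).
Proof.
move=> g0 l0.
have W0 (w : {ffun Req -> J}) : 0 <= \prod_r g r (w r) by apply: prodr_ge0.
rewrite big_mkcond /=.
apply: (@le_trans _ _ (\sum_(w : {ffun Req -> J}) (\prod_r g r (w r)) * expR (l * (\sum_r X r (w r) - a)))).
  apply: ler_sum => w _; case: ifP => h.
    rewrite ler_peMr //; apply: le_trans (expR_ge1Dx _); rewrite lerDl.
    by rewrite mulr_ge0 // subr_ge0.
  by rewrite mulr_ge0 // expR_ge0.
rewrite bigA_distr_bigA mulr_sumr le_eqVlt; apply/orP; left; apply/eqP; apply: eq_bigr => w _.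
rewrite mulrBr expRB big_split /= -expR_sum -mulr_sumr expRN.
ring.
Qed.

End Calc.

Lemma path_edge (VS : finType) (F : {set VS * VS}) (s t : VS) (P : {set VS * VS}) a b :
  is_path_in F s t P -> (a, b) \in P -> (a, b) \in F.
Proof.
move=> [p [hp _ _ ->]]; rewrite inE.
elim: p s hp => // x p IH s /= /andP[sx hp]; rewrite in_cons => /orP[/eqP [-> ->] // | h].
exact: IH hp h.
Qed.

Theorem lemma23
  (R : realType) (VS Ty : finType) (ES : rel VS) (VT : Ty -> {set VS})
  (dSV : Ty -> VS -> R) (dSE : VS -> VS -> R)
  (Req : finType) (req : Req -> request VS Ty R)
  (K : finType) (Kr : Req -> {set K}) (f : Req -> K -> R)
  (m : forall r, K -> mapping (req r))
  (u v : VS) (eps : R) :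
  (forall tau x, x \in VT tau -> 0 < dSV tau x) ->
  (forall a b, ES a b -> 0 < dSE a b) ->
  (forall r, wf_request VT ES (req r)) ->
  (forall r k, k \in Kr r -> 0 < f r k /\ valid_mapping (m r k)) ->
  (forall r, \sum_(k in Kr r) f r k <= 1) ->
  (forall a b, ES a b ->
     \sum_(r : Req) \sum_(k in Kr r) f r k * alloc_edge (m r k) a b <= dSE a b) ->
  (forall tau x, x \in VT tau ->
     \sum_(r : Req) \sum_(k in Kr r) f r k * alloc_node (m r k) tau x <= dSV tau x) ->
  ES u v ->
  0 < eps -> eps <= 1 ->
  (forall r, dmax (req r) u v / dSE u v <= eps) ->
  let Delta := \sum_(r : Req) (Amax (req r) u v / dmax (req r) u v) ^+ 2 in
  let gamma := 1 + eps * Num.sqrt (2 * Delta * ln (#|VS|%:R)) in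
  \sum_(w : {ffun Req -> option K} | gamma * dSE u v <= rounded_alloc m w u v)
     outcome_weight Kr f w
  <= (#|VS|%:R) ^- 4.
Proof.
move=> hSV hSE hwf hf hsum hcapE hcapV huv eps0 eps1 hdmax.
pose Delta := \sum_(r : Req) (Amax (req r) u v / dmax (req r) u v) ^+ 2.
pose gamma := 1 + eps * Num.sqrt (2 * Delta * ln (#|VS|%:R : R)).
change (\sum_(w : {ffun Req -> option K} | gamma * dSE u v <= rounded_alloc m w u v)
     outcome_weight Kr f w <= (#|VS|%:R) ^- 4).
set d := dSE u v.
have d0 : 0 < d := hSE u v huv.
pose g r (o : option K) : R :=
  match o with Some k => if k \in Kr r then f r k else 0
             | None => 1 - \sum_(k in Kr r) f r k end.
pose X r (o : option K) : R :=
  match o with Some k => alloc_edge (m r k) u v | None => 0 end.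
pose c r := Amax (req r) u v.
pose D r := dmax (req r) u v.
have g0 r o : 0 <= g r o.
  case: o => [k|] /=; last by rewrite subr_ge0 hsum.
  by case: ifP => kK //; exact: ltW (hf r k kK).1.
have g1 r : \sum_o g r o = 1 by rewrite sum_option /= -big_mkcond /= subrK.
have alloc0 r k : 0 <= alloc_edge (m r k) u v.
  by case: (hwf r) => _ hd _ _; apply: sumr_ge0 => p _; exact: hd.
have c0 r : 0 <= c r by exact: bigmax_ge0.
have cge r k : k \in Kr r -> alloc_edge (m r k) u v <= c r.
  move=> kK; rewrite /c /Amax.
  apply: (@le_bigmax _ _ (fun m0 => `[< valid_mapping m0 >]) (fun m0 => alloc_edge m0 u v)).
  by apply/asboolP; exact: (hf r k kK).2.
have gX r o : 0 < g r o -> 0 <= X r o <= c r.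
  case: o => [k|] /=; last by rewrite lexx c0.
  by case: ifP => kK; [rewrite alloc0 cge | rewrite ltxx].
have mu r : \sum_o g r o * X r o = \sum_(k in Kr r) f r k * alloc_edge (m r k) u v.
  rewrite sum_option /= mulr0 add0r [RHS]big_mkcond /=.
  by apply: eq_bigr => k _; case: ifP => _; rewrite ?mul0r.
have musum : \sum_r \sum_o g r o * X r o <= d.
  under eq_bigr => r _ do rewrite mu.
  exact: hcapE.
have Dge r : 0 <= D r by exact: bigmax_ge0.
have cD0 r : D r = 0 -> c r = 0.
  move=> D0; apply/eqP; rewrite eq_le c0 andbT.
  rewrite /c /Amax; apply: bigmax_le => // m0 /asboolP [_ hE].
  apply: le_trans (_ : \sum_(p : vnode (req r) * vnode (req r) | vedge (req r) p.1 p.2 && ((u, v) \in m0.2 p)) 0 <= 0); last by rewrite big1.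
  apply: ler_sum => p /andP[he hin].
  rewrite -D0 /D /dmax.
  apply: (@le_bigmax _ _ (fun p : vnode (req r) * vnode (req r) => vedge (req r) p.1 p.2 && ((u, v) \in allowedE (req r) p.1 p.2)) (fun p => dedge (req r) p.1 p.2)).
  rewrite he /=.
  move: he hin; case: p => a b /= he hin; exact: path_edge (hE _ _ he) hin.
have Cle : \sum_r c r ^+ 2 <= eps ^+ 2 * d ^+ 2 * Delta.
  rewrite /Delta mulr_sumr; apply: ler_sum => r _.
  have [Dz|Dnz] := eqVneq (D r) 0.
    by rewrite (cD0 r Dz) expr0n /= mulr_ge0 // ?sqr_ge0 // mulr_ge0 // sqr_ge0.
  have Dp : 0 < D r by rewrite lt_def Dnz Dge.
  have De : D r <= eps * d.
    by have := hdmax r; rewrite -/(D r) -/d ler_pdivrMr.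
  rewrite -/(c r) -/(D r).
  have -> : c r ^+ 2 = (c r / D r) ^+ 2 * D r ^+ 2 by rewrite -exprMn divfK.
  rewrite [X in _ <= X]mulrC; apply: ler_wpM2l; first exact: sqr_ge0.
  rewrite -exprMn !expr2; apply: ler_pM => //.
have Sx w : rounded_alloc m w u v = \sum_r X r (w r) by [].
have Wx w : outcome_weight Kr f w = \prod_r g r (w r) by [].
have n1 : (1 <= #|VS|)%N by apply/card_gt0P; exists u.
set n := #|VS|%:R.
have n1R : 1 <= n by rewrite /n ler1n.
set L := ln n.
have L0 : 0 <= L by exact: ln_ge0.
have sq0 : 0 <= Num.sqrt (2 * Delta * L) by exact: sqrtr_ge0.
have gam1 : 1 <= gamma by rewrite /gamma lerDl mulr_ge0 // ltW.
have Delta0 : 0 <= Delta by apply: sumr_ge0 => r _; exact: sqr_ge0.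
have [Cz|Cnz] := eqVneq (\sum_r c r ^+ 2) 0.
  have cz r : c r = 0.
    have := psumr_eq0P (fun r _ => sqr_ge0 (c r)) Cz (i := r) isT.
    by move/eqP; rewrite sqrf_eq0 => /eqP.
  rewrite big1 ?invr_ge0 ?exprn_ge0 // ?(le_trans ler01 n1R) //.
  move=> w hw; apply/eqP; apply: contraT => Wn0.
  have hall r : g r (w r) != 0 by move: Wn0; rewrite Wx => /prodf_neq0; apply.
  have S0 : rounded_alloc m w u v = 0.
    rewrite Sx big1 // => r _.
    have /gX : 0 < g r (w r) by rewrite lt_def hall g0.
    rewrite cz => /andP[h1 h2]; apply/eqP; rewrite eq_le h1 h2 //.
  move: hw; rewrite S0 => hw.
  have : 0 < gamma * d by rewrite mulr_gt0 // (lt_le_trans ltr01 gam1).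
  by rewrite lt_leAnge hw andbF.
set C := \sum_r c r ^+ 2.
have Cp : 0 < C by rewrite lt_def Cnz sumr_ge0 // => r _; exact: sqr_ge0.
set t := eps * Num.sqrt (2 * Delta * L) * d.
have t0 : 0 <= t by rewrite /t; apply: mulr_ge0; [apply: mulr_ge0; [exact: ltW | exact: sq0] | exact: ltW].
have gd : gamma * d = d + t by rewrite /gamma /t mulrDl mul1r.
pose l := 4 * t / C.
have l0 : 0 <= l by rewrite /l divr_ge0 // ?mulr_ge0 // ltW.
have CH := @chernoff_fin R Req (option K) g X (gamma * d) l g0 l0.
apply: le_trans CH _.
apply: (@le_trans _ _ (expR (- (l * (gamma * d))) * \prod_r expR (l * (\sum_o g r o * X r o) + l ^+ 2 * c r ^+ 2 / 8))).
  apply: ler_wpM2l; first exact: expR_ge0.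
  apply: ler_prod => r _; rewrite sumr_ge0 /=; last by move=> o _; rewrite mulr_ge0 // expR_ge0.
  by apply: hoeff => //; exact: gX.
rewrite -expR_sum -expRD big_split /= -mulr_sumr -mulr_suml -mulr_sumr -/C.
have t2 : t ^+ 2 = eps ^+ 2 * (2 * Delta * L) * d ^+ 2.
  by rewrite /t !exprMn sqr_sqrtr // mulr_ge0 // mulr_ge0.
apply: (@le_trans _ _ (expR (- (4 * L)))).
  rewrite ler_expR gd.
  have E1 : - (l * (d + t)) + (l * \sum_r \sum_o g r o * X r o + l ^+ 2 * C / 8)
           <= - (l * t) + l ^+ 2 * C / 8.
    have := ler_wpM2l l0 musum; lra.
  apply: le_trans E1 _.
  have -> : - (l * t) + l ^+ 2 * C / 8 = - (2 * t ^+ 2 / C).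
    by rewrite /l; field; rewrite gt_eqF.
  rewrite lerN2 ler_pdivlMr // t2.
  have := ler_wpM2l (mulr_ge0 (ler0n _ 4) L0) Cle.
  move=> h; apply: le_trans h _.
  by rewrite le_eqVlt; apply/orP; left; apply/eqP; ring.
rewrite expRN expRM_natl lnK // posrE.
exact: lt_le_trans ltr01 n1R.
Qed.
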